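(* Let $k\ge n\ge 2$, and let $\pi$ assign to each $n$-element subset $S\subseteq[k]$ a string $\pi(S)$ of length $n$ that is an ordering of the elements of $S$. Let $R\subseteq[k]$ with $|R|=n-1$, and suppose that $d(\pi(S),\pi(S'))\le 2$ for all $S,S'\in\mathcal U_R$. Then there exists a subset $A_R\subseteq R$ of size $n-2$ such that $R$ freezes $A_R$.
   Context: $[k]=\{1,\dots,k\}$; $d$ is Hamming distance; $\pi(S)[i]$ is the letter at position $i\in[n]$ of $\pi(S)$. For a set $R\subseteq[k]$, $\mathcal U_R$ is the set of all sets $S\subseteq[k]$ with $R\subset S$ and $|S|=|R|+1$. For $|R|=n-1$ and $A_R\subseteq R$, we say $R$ freezes $A_R$ (with freezing function $g_R$) if there is a one-to-one map $g_R:A_R\to[n]$ such that $\pi(S)[g_R(a)]=a$ for all $a\in A_R$ and all $S\in\mathcal U_R$. *)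

(* Defs.v *)
(* [k] is represented by 'I_k (0-indexed), positions [n] by 'I_n. *)
From mathcomp Require Import all_boot.
Set Implicit Arguments. Unset Strict Implicit. Unset Printing Implicit Defensive.

Definition hamming (T : eqType) (n : nat) (s t : n.-tuple T) : nat :=
  #|[set i : 'I_n | tnth s i != tnth t i]|.

Definition U_of (k : nat) (R : {set 'I_k}) : {set {set 'I_k}} :=
  [set S : {set 'I_k} | (R \subset S) && (#|S| == #|R|.+1)].

Definition is_ordering_assignment (k n : nat) (pi : {set 'I_k} -> n.-tuple 'I_k) : Prop :=
  forall S : {set 'I_k}, #|S| = n -> perm_eq (pi S) (enum S).

Definition freezes (k n : nat) (pi : {set 'I_k} -> n.-tuple 'I_k)
    (R A : {set 'I_k}) : Prop :=
  exists g : 'I_k -> 'I_n,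
    {in A &, injective g} /\
    (forall a, a \in A -> forall S, S \in U_of R -> tnth (pi S) (g a) = a).

(* Main.v *)
Require Import Defs.
From mathcomp Require Import all_boot.
From Stdlib Require Import Classical.
From mathcomp Require Import zify.

Lemma three_le (T : finType) (D : {set T}) i j q :
  i \in D -> j \in D -> q \in D -> i != j -> i != q -> j != q -> 3 <= #|D|.
Proof.
move=> iD jD qD ij iq jq.
rewrite (cardsD1 i) iD (cardsD1 j (D :\ i)) !inE eq_sym ij jD.
rewrite (cardsD1 q (D :\ i :\ j)) !inE eq_sym jq eq_sym iq qD.
by [].
Qed.


Lemma two_cases (T : finType) (D : {set T}) i q x :
  #|D| <= 2 -> i \in D -> q \in D -> i != q -> x \in D -> x = i \/ x = q.
Proof.
move=> cD iD qD iq xD.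
case: (eqVneq x i) => [->|xi]; first by left.
case: (eqVneq x q) => [->|xq]; first by right.
have := @three_le _ D i q x iD qD xD iq; rewrite eq_sym xi eq_sym xq => /(_ isT isT) H.
by move: (leq_trans H cD).
Qed.

Theorem lemma3p6 (k n : nat) (pi : {set 'I_k} -> n.-tuple 'I_k) (R : {set 'I_k}) :
  2 <= n -> n <= k ->
  is_ordering_assignment pi ->
  #|R| = n.-1 ->
  (forall S S', S \in U_of R -> S' \in U_of R -> hamming (pi S) (pi S') <= 2) ->
  exists A : {set 'I_k}, [/\ A \subset R, #|A| = n - 2 & freezes pi R A].
Proof.
move=> n2 nk ord cR ham.
have [x0 x0R] : exists x0, x0 \notin R.
  have : 0 < #|~: R| by rewrite cardsCs setCK card_ord cR subn_gt0; apply: leq_trans nk; rewrite prednK // ltnW.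
  by case/card_gt0P => x; rewrite inE => ?; exists x.
set S0 := x0 |: R.
have US : forall S, S \in U_of R ->
   [/\ R \subset S, #|S| = n, (forall x, (x \in pi S) = (x \in S)) & uniq (pi S)].
  move=> S; rewrite inE => /andP[sub /eqP cS].
  have cSn : #|S| = n by rewrite cS cR prednK // ltnW.
  have P := ord S cSn; split => //.
    by move=> x; rewrite (perm_mem P) mem_enum.
  by rewrite (perm_uniq P) enum_uniq.
have S0U : S0 \in U_of R by rewrite inE subsetUr cardsU1 x0R add1n eqxx.
set t0 := pi S0.
have [_ _ mem0 u0] := US S0 S0U.
have inj0 : injective (tnth t0) by apply/tuple_uniqP.
pose D S := [set i | tnth (pi S) i != tnth t0 i].
have hD : forall S, S \in U_of R -> #|D S| <= 2 by move=> S SU; exact: ham S S0 SU S0U.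
have key : forall S i, S \in U_of R -> i \in D S -> tnth t0 i \in R ->
   exists q, [/\ tnth t0 q \notin R, tnth (pi S) q = tnth t0 i &
              forall j, j \in D S -> j = i \/ j = q].
  move=> S i SU iD ai.
  have [subS cS memS uS] := US S SU.
  have : tnth t0 i \in pi S by rewrite memS (subsetP subS).
  case/tnthP => j aj.
  have ji : j != i by apply: contraTneq iD => E; rewrite /D inE aj E eqxx.
  have jD : j \in D S by rewrite /D inE -aj; apply: contra ji => /eqP/inj0 E; by rewrite E eqxx.
  have : x0 \in t0 by rewrite mem0 setU11.
  case/tnthP => q xq.
  have x0S : x0 \notin S.
    apply: contraTN iD => x0S.
    have -> : S = S0.
      apply/eqP; rewrite eq_sym eqEcard cS subUset sub1set x0S subS.
      have [_ cS0 _ _] := US S0 S0U. by rewrite cS0 leqnn.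
    by rewrite /D inE eqxx.
  have qD : q \in D S.
    rewrite /D inE -xq; apply: contra x0S => /eqP <-; by rewrite -memS mem_tnth.
  have qR : tnth t0 q \notin R by rewrite -xq.
  have iq : i != q by apply: contraNneq qR => <-.
  have tc := @two_cases _ (D S) i q _ (hD S SU) iD qD iq.
  exists q; split => //.
    case: (tc j jD) => E; first by rewrite E eqxx in ji.
    by rewrite aj E.
have uniq_moved : forall S1 S2 i1 i2, S1 \in U_of R -> S2 \in U_of R ->
    i1 \in D S1 -> i2 \in D S2 -> tnth t0 i1 \in R -> tnth t0 i2 \in R -> i1 = i2.
  move=> S1 S2 i1 i2 S1U S2U i1D i2D a1R a2R.
  apply/eqP; apply: contraT => ne.
  have [q1 [q1R e1 D1]] := key S1 i1 S1U i1D a1R.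
  have [q2 [q2R e2 D2]] := key S2 i2 S2U i2D a2R.
  pose E := [set i | tnth (pi S1) i != tnth (pi S2) i].
  have fix2 : forall i, i \in D S2 -> tnth t0 i \in R -> i = i2.
    move=> i iD iR; case: (D2 i iD) => // Eq; by rewrite Eq (negbTE q2R) in iR.
  have fix1 : forall i, i \in D S1 -> tnth t0 i \in R -> i = i1.
    move=> i iD iR; case: (D1 i iD) => // Eq; by rewrite Eq (negbTE q1R) in iR.
  have s2i1 : tnth (pi S2) i1 = tnth t0 i1.
    apply/eqP; apply: contraT => H.
    have : i1 \in D S2 by rewrite /D inE.
    by move=> /fix2 /(_ a1R) Eq; rewrite Eq eqxx in ne.
  have s1i2 : tnth (pi S1) i2 = tnth t0 i2.
    apply/eqP; apply: contraT => H.
    have : i2 \in D S1 by rewrite /D inE.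
    by move=> /fix1 /(_ a2R) Eq; rewrite Eq eqxx in ne.
  have i1E : i1 \in E.
    by rewrite inE s2i1; move: i1D; rewrite /D inE.
  have i2E : i2 \in E.
    by rewrite inE s1i2 eq_sym; move: i2D; rewrite /D inE.
  have q1E : q1 \in E.
    rewrite inE e1.
    case: (boolP (q1 \in D S2)) => qD.
      case: (D2 q1 qD) => Eq.
        by rewrite Eq a2R in q1R.
      rewrite Eq e2; apply: contra ne => /eqP /inj0 ->; exact: eqxx.
    move: qD; rewrite /D inE negbK => /eqP ->.
    by apply: contraNneq q1R => <-.
  have i1q1 : i1 != q1 by apply: contraNneq q1R => <-.
  have i2q1 : i2 != q1 by apply: contraNneq q1R => <-.
  have := @three_le _ E i1 i2 q1 i1E i2E q1E ne i1q1 i2q1.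
  have : #|E| <= 2 by exact: ham S1 S2 S1U S2U.
  by move=> h1 h2; move: (leq_trans h2 h1).
pose moved a := exists S i, [/\ S \in U_of R, i \in D S, tnth t0 i = a & a \in R].
have [b [bR bU]] : exists b, b \in R /\ forall a, moved a -> a = b.
  case: (classic (exists a, moved a)) => [[a Ha]|Hn].
    exists a; split; first by case: Ha => S [i [_ _ <- ]].
    move=> a' [S' [i' [S'U i'D <- a'R]]].
    case: Ha => S [i [SU iD ai aR]].
    by rewrite -ai; congr tnth; apply: (uniq_moved S' S) => //; rewrite ai.
  have : 0 < #|R| by rewrite cR -ltnS prednK // ltnW.
  case/card_gt0P => b bR; exists b; split => // a Ha.
  by exfalso; apply: Hn; exists a.
have n0 : 0 < n by exact: ltnW n2.
pose i0 : 'I_n := Ordinal n0.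
pose g a := odflt i0 [pick i | tnth t0 i == a].
have gP : forall a, a \in S0 -> tnth t0 (g a) = a.
  move=> a aS; rewrite /g; case: pickP => [i /eqP //|H].
  by move: aS; rewrite -mem0 => /tnthP [i Ei]; move: (H i); rewrite /= Ei eqxx.
exists (R :\ b); split.
- exact: subsetDl.
- by move: (cardsD1 b R); rewrite bR cR => H; rewrite subn2; lia.
exists g; split.
  move=> a1 a2; rewrite !inE => /andP[_ a1R] /andP[_ a2R] Eg.
  by rewrite -(gP a1 (setU1r _ a1R)) Eg gP // setU1r.
move=> a; rewrite !inE => /andP[ab aR] S SU.
apply/eqP; apply: contraT => ne.
have gD : g a \in D S by rewrite /D inE gP // setU1r.
have : moved a by exists S, (g a); split => //; rewrite gP // setU1r.
by move/bU => Eq; rewrite Eq eqxx in ab.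
Qed.
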